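(* Let $n,x$ be integers with $1<x<n$, so that $G=C_{2n}(x,1,n)$ is a $5$-regular circulant graph. If $n\equiv x\equiv 2 \pmod 3$, then $G$ is word-representable.
   Context: Two distinct letters $x,y$ alternate in a word $w$ if, after deleting all other letters from $w$, the resulting word is of the form $xyxy\cdots$ or $yxyx\cdots$ (of even or odd length). A graph $G=(V,E)$ is word-representable if there is a word $w$ over the alphabet $V$, containing every letter of $V$ at least once, such that for all distinct $x,y\in V$, $xy\in E$ if and only if $x$ and $y$ alternate in $w$. For an integer $m$ and a set $R$ of positive integers each at most $m/2$, the circulant graph $C_m(R)$ has vertex set $\{0,1,\dots,m-1\}$, with $i$ and $j$ adjacent iff $\min(|i-j|,\,m-|i-j|)\in R$. $C_{2n}(x,1,n)$ denotes the circulant graph on $2n$ vertices with jump set $\{1,x,n\}$; it is $5$-regular exactly when $1<x<n$. *)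

(* Defs.v *)
From mathcomp Require Import all_boot.
Set Implicit Arguments.
Local Open Scope nat_scope. Unset Strict Implicit. Unset Printing Implicit Defensive.

Definition restrict2 (T : eqType) (w : seq T) (a b : T) : seq T :=
  filter (fun z => (z == a) || (z == b)) w.

(* a and b alternate in w: the restriction of w to {a,b} has no two equal
   consecutive letters, i.e. it is of the form abab... or baba... *)
Definition alternate (T : eqType) (w : seq T) (a b : T) : bool :=
  sorted (fun u v => u != v) (restrict2 w a b).

Definition word_representable (T : finType) (E : rel T) : Prop :=
  exists w : seq T,
    (forall v : T, v \in w) /\
    (forall a b : T, a != b -> (E a b <-> alternate w a b)).

Definition absdiff (i j : nat) : nat := if i <= j then j - i else i - j.

Definition circulant (m : nat) (R : pred nat) : rel 'I_m :=
  fun i j => let d := absdiff i j in minn d (m - d) \in R.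
Arguments circulant : clear implicits.

Definition C2n_x1n (n x : nat) : rel 'I_(2 * n)%N :=
  circulant (2 * n)%N [pred k | (k == 1) || (k == x) || (k == n)].
Arguments C2n_x1n : clear implicits.

(* Main.v *)
Require Import Defs.
From mathcomp Require Import all_boot zify.
Set Implicit Arguments. Unset Strict Implicit. Unset Printing Implicit Defensive.

Section Gen.
Variables (T : finType) (E : rel T) (h : T -> nat).

Lemma R2_cat (s1 s2 : seq T) a b :
  restrict2 (s1 ++ s2) a b = restrict2 s1 a b ++ restrict2 s2 a b.
Proof. by rewrite /restrict2 filter_cat. Qed.

Lemma R2_filter (S : pred T) (s : seq T) a b :
  restrict2 [seq v <- s | S v] a b = [seq v <- restrict2 s a b | S v].
Proof.
by rewrite /restrict2 -!filter_predI; apply: eq_filter => z /=; rewrite andbC.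
Qed.

Lemma R2_flatten (L : seq (seq T)) a b :
  restrict2 (flatten L) a b = flatten [seq restrict2 s a b | s <- L].
Proof. by elim: L => //= s L IH; rewrite R2_cat IH. Qed.

Lemma R2_sym (s : seq T) a b : restrict2 s a b = restrict2 s b a.
Proof. by rewrite /restrict2; apply: eq_filter => z; rewrite orbC. Qed.

Lemma alt_sym (s : seq T) a b : alternate s a b = alternate s b a.
Proof. by rewrite /alternate R2_sym. Qed.

Lemma R2_enum a b : a != b ->
  restrict2 (enum T) a b = [:: a; b] \/ restrict2 (enum T) a b = [:: b; a].
Proof.
move=> ab; set r := restrict2 _ a b.
have ur : uniq r by rewrite /r /restrict2 filter_uniq // enum_uniq.
have ma : a \in r by rewrite /r /restrict2 mem_filter eqxx mem_enum.
have mb : b \in r by rewrite /r /restrict2 mem_filter eqxx orbT mem_enum.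
have s1 : size r <= 2.
  have -> : 2 = size [:: a; b] by [].
  apply: uniq_leq_size => // z; rewrite /r /restrict2 mem_filter !inE.
  by case/andP.
have s2 : 2 <= size r.
  have -> : 2 = size [:: a; b] by [].
  apply: uniq_leq_size => [|z]; first by rewrite /= inE ab.
  by rewrite !inE; case/orP => /eqP ->.
move: ur ma mb s1 s2; case: r => [|x [|y [|z r]]] //= .
rewrite !inE => /andP [xy _].
case/orP => /eqP ax; case/orP => /eqP bx _ _; subst.
- by rewrite eqxx in ab.
- by left.
- by right.
- by rewrite eqxx in ab.
Qed.

Definition lev (s : seq T) : seq T :=
  [seq v <- s | h v == 0] ++ [seq v <- s | h v == 1] ++
  [seq v <- s | h v == 2] ++ [seq v <- s | h v == 3].

Hypothesis h4 : forall v, h v < 4.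

Lemma mem_lev v : v \in lev (enum T).
Proof.
have : v \in enum T by rewrite mem_enum.
move: (enum T) => s vs.
rewrite /lev !mem_cat !mem_filter vs !andbT.
by move: (h4 v); case: (h v) => [|[|[|[|]]]].
Qed.

Lemma R2_lev_same (s : seq T) a b : h a = h b ->
  restrict2 (lev s) a b = restrict2 s a b.
Proof.
move=> hab; rewrite /lev !R2_cat !R2_filter.
have H : forall i, [seq v <- restrict2 s a b | h v == i] =
   if h a == i then restrict2 s a b else [::].
  move=> i; case: ifP => hi.
    apply/all_filterP/allP => z; rewrite /restrict2 mem_filter.
    by case/andP => /orP [] /eqP -> _; rewrite -?hab.
  rewrite (@eq_in_filter _ _ pred0) ?filter_pred0 // => z.
  rewrite /restrict2 mem_filter; case/andP => /orP [] /eqP -> _ /=;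
  by rewrite -?hab hi.
rewrite !H; move: (h4 a); case: (h a) => [|[|[|[|]]]] //= _; by rewrite ?cats0.
Qed.

Lemma R2_lev_lt (s : seq T) a b : a != b -> h a < h b ->
  restrict2 s a b = [:: a; b] \/ restrict2 s a b = [:: b; a] ->
  restrict2 (lev s) a b = [:: a; b].
Proof.
move=> ab hab Hs; rewrite /lev !R2_cat !R2_filter.
move: (h4 a) (h4 b) hab.
case: Hs => ->; rewrite /=; case: (h a) => [|[|[|[|]]]]; case: (h b) => [|[|[|[|]]]] //=.
Qed.



Fixpoint abk (a b : T) (k : nat) : seq T :=
  if k is k'.+1 then a :: b :: abk a b k' else [::].

Lemma abk_cat a b m n : abk a b (m + n) = abk a b m ++ abk a b n.
Proof. by elim: m => //= m ->. Qed.

Lemma abk_sorted a b k : a != b -> sorted (fun u v => u != v) (abk a b k).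
Proof.
move=> ab; case: k => //= k.
have : path (fun u v => u != v) b (abk a b k).
  elim: k => //= k IH; rewrite eq_sym ab /=; by [].
by rewrite ab.
Qed.

Lemma notsorted (s1 s2 : seq T) y :
  ~~ sorted (fun u v => u != v) (s1 ++ y :: y :: s2).
Proof.
apply/negP => /cat_sorted2 [] _ /=; by rewrite eqxx.
Qed.

Lemma flat_abk a b (L : seq (seq T)) :
  (forall s, s \in L -> exists k, restrict2 s a b = abk a b k) ->
  exists k, restrict2 (flatten L) a b = abk a b k.
Proof.
elim: L => [|s L IH] H; first by exists 0.
have [k1 Hk1] := H s (mem_head _ _).
have [k2 Hk2] : exists k, restrict2 (flatten L) a b = abk a b k.
  by apply: IH => t tL; apply: H; rewrite inE tL orbT.
by exists (k1 + k2); rewrite /= R2_cat Hk1 Hk2 abk_cat.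
Qed.

Definition e : rel T := fun u v => E u v && (h u < h v).
Definition P := locked (lev (enum T)).
Definition P' := locked (lev (rev (enum T))).
Definition blk (S : pred T) := [seq v <- P | S v].
Definition gad1 (p q : T) :=
  P ++ blk (fun v => connect e v q) ++ blk (fun v => ~~ connect e v q).
Definition gad2 (p q : T) :=
  blk (fun v => ~~ connect e q v) ++ blk (fun v => connect e v p || connect e q v)
  ++ blk (fun v => ~~ connect e v p).
Definition gad (p q : T) :=
  if ~~ E p q && (h p < h q) then (if connect e p q then gad2 p q else gad1 p q)
  else [::].
Definition Frow p := flatten [seq gad p q | q <- enum T].
Definition Gw := flatten [seq Frow p | p <- enum T].
Definition w := P ++ Gw ++ P ++ P'.

Lemma path_len u s : path e u s -> h u + size s <= h (last u s).
Proof.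
elim: s u => [|v s IH] u /=; first by rewrite addn0.
case/andP => euv pv; move: euv; rewrite /e => /andP [_ huv]; move: (IH v pv).
by move=> H; rewrite addnS; apply: leq_trans H; rewrite ltn_add2r.
Qed.

Lemma conn_mono u v : connect e u v -> h u <= h v.
Proof.
case/connectP => s ps ->; move: (path_len ps); apply: leq_trans; exact: leq_addr.
Qed.

Lemma conn_small u v : connect e u v -> h v <= h u + 2 ->
  u = v \/ e u v \/ exists2 m, e u m & e m v.
Proof.
case/connectP => s ps -> hb; move: (path_len ps) hb.
case: s ps => [|m [|m' [|m'' s]]] /=.
- by left.
- by rewrite andbT => ?; right; left.
- by case/andP => ? /andP [? _] _ _; right; right; exists m.
- move=> _ H1 H2; move: (leq_trans H1 H2).
  lia.
Qed.

Lemma P_ab a b : a != b -> h a < h b -> restrict2 P a b = [:: a; b].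
Proof. by move=> ab hab; rewrite /P -lock; apply: R2_lev_lt => //; apply: R2_enum. Qed.


Hypothesis Esym : forall a b, E a b = E b a.
Hypothesis Eh : forall a b, E a b -> h a != h b.
Hypothesis ST : forall a b p q, E a b -> h a < h b -> connect e a p ->
  connect e p q -> connect e q b -> h p < h q -> E p q.

Lemma gad_edge a b p q : E a b -> h a < h b ->
  exists k, restrict2 (gad p q) a b = abk a b k.
Proof.
move=> Eab hab.
have ab : a != b by apply/eqP => abe; move: hab; rewrite abe ltnn.
have eab : e a b by rewrite /e Eab hab.
rewrite /gad; case: ifP => [/andP [npq hpq]|_]; last by exists 0.
exists 2; case: ifP => cpq.
- rewrite /gad2 /blk !R2_cat !R2_filter P_ab //=.
  have c1 : connect e b p -> connect e a p := connect_trans (connect1 eab).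
  have c2 : connect e q a -> connect e q b := fun H => connect_trans H (connect1 eab).
  have c3 : forall v, connect e v p -> connect e q v -> False.
    move=> v H1 H2; have := conn_mono (connect_trans H2 H1); by rewrite leqNgt hpq.
  have c4 : connect e a p -> connect e q b -> False.
    by move=> H1 H2; move: (ST Eab hab H1 cpq H2 hpq); rewrite (negbTE npq).
  move: c1 c2 (c3 a) (c3 b) c4.
  case: (connect e a p); case: (connect e b p); case: (connect e q a);
  case: (connect e q b) => H1 H2 H3 H4 H5 //=;
  exfalso; first [exact: H3 isT isT | exact: H4 isT isT | exact: H5 isT isT
    | by move: (H1 isT) | by move: (H2 isT)].
- rewrite /gad1 /blk !R2_cat !R2_filter P_ab //=.
  have c1 : connect e b q -> connect e a q := connect_trans (connect1 eab).
  move: c1; case: (connect e a q); case: (connect e b q) => H1 //=.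
  by move: (H1 isT).
Qed.

Lemma gad_nonedge a b : ~~ E a b -> h a < h b ->
  exists t1 t2 y, restrict2 (gad a b) a b = t1 ++ y :: y :: t2.
Proof.
move=> nab hab.
have ab : a != b by apply/eqP => abe; move: hab; rewrite abe ltnn.
have nba : ~~ connect e b a.
  by apply/negP => /conn_mono; rewrite leqNgt hab.
rewrite /gad nab hab /=; case: ifP => cab.
- rewrite /gad2 /blk !R2_cat !R2_filter P_ab //= !connect0 (negbTE nba) /=.
  by exists [::], [:: b; b], a.
- rewrite /gad1 /blk !R2_cat !R2_filter P_ab //= !connect0 cab /=.
  by exists [:: a], [:: a], b.
Qed.

Lemma split_seq (s : seq T) x : x \in s -> exists s1 s2, s = s1 ++ x :: s2.
Proof. by case/splitPr => s1 s2; exists s1, s2. Qed.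

Lemma Gw_split a b : exists u1 u2,
  restrict2 Gw a b = u1 ++ restrict2 (gad a b) a b ++ u2.
Proof.
have [s1 [s2 Es]] := split_seq (mem_enum T a).
have [t1 [t2 Et]] := split_seq (mem_enum T b).
rewrite /Gw Es map_cat flatten_cat /= [Frow a]/Frow Et map_cat flatten_cat /=.
rewrite !R2_cat.
set A := restrict2 (flatten _) a b.
set B := restrict2 (flatten [seq gad a q | q <- t1]) a b.
set C := restrict2 (flatten [seq gad a q | q <- t2]) a b.
set D := restrict2 (flatten _) a b.
by exists (A ++ B), (C ++ D); rewrite -!catA.
Qed.

Lemma Gw_edge a b : E a b -> h a < h b -> exists k, restrict2 Gw a b = abk a b k.
Proof.
move=> Eab hab; apply: flat_abk => s /mapP [p _ ->]; rewrite /Frow.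
by apply: flat_abk => t /mapP [q _ ->]; apply: gad_edge.
Qed.

Lemma key a b : h a < h b -> (E a b <-> alternate w a b).
Proof.
move=> hab.
have ab : a != b by apply/eqP => abe; move: hab; rewrite abe ltnn.
have HP' : restrict2 P' a b = [:: a; b].
  rewrite /P' -lock; apply: R2_lev_lt => //; rewrite /restrict2 filter_rev.
  by case: (R2_enum ab); rewrite /restrict2 => ->; [right | left].
split.
- move=> Eab; have [k Hk] := Gw_edge Eab hab.
  rewrite /alternate /w !R2_cat Hk HP' P_ab //.
  have -> : [:: a; b] = abk a b 1 by [].
  by rewrite -!abk_cat; apply: abk_sorted.
- move=> alt; apply/negPn/negP => nE.
  have [t1 [t2 [y Hy]]] := gad_nonedge nE hab.
  have [u1 [u2 Hu]] := Gw_split a b.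
  move: alt; rewrite /alternate /w !R2_cat Hu Hy.
  set X := restrict2 P a b; set Y := restrict2 P' a b.
  have -> : X ++ (u1 ++ (t1 ++ [:: y, y & t2]) ++ u2) ++ X ++ Y =
     (X ++ u1 ++ t1) ++ [:: y, y & t2 ++ u2 ++ X ++ Y] by rewrite -!catA.
  by move/negP: (notsorted (X ++ u1 ++ t1) (t2 ++ u2 ++ X ++ Y) y).
Qed.

Lemma same a b : a != b -> h a = h b -> ~~ alternate w a b.
Proof.
move=> ab hab; rewrite /alternate /w !R2_cat /P /P' -!lock !R2_lev_same //.
have Hr : restrict2 (rev (enum T)) a b = rev (restrict2 (enum T) a b).
  by rewrite /restrict2 filter_rev.
rewrite Hr; case: (R2_enum ab) => ->.
- have := notsorted ([:: a; b] ++ restrict2 Gw a b ++ [:: a]) [:: a] b.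
  by rewrite -!catA.
- have := notsorted ([:: b; a] ++ restrict2 Gw a b ++ [:: b]) [:: b] a.
  by rewrite -!catA.
Qed.

Theorem gen_wr : word_representable E.
Proof.
exists w; split; first by move=> v; rewrite /w mem_cat /P -lock mem_lev.
move=> a b ab; case: (ltngtP (h a) (h b)) => hab.
- exact: key.
- rewrite Esym alt_sym; exact: key.
- split; first by move/Eh; rewrite hab eqxx.
  by move=> H; move: (same ab hab); rewrite H.
Qed.

End Gen.

Section ST.
Variables (T : finType) (E : rel T) (h : T -> nat).
Hypothesis h4 : forall v, h v < 4.
Variables z0 zl z1 z2 : T.
Hypothesis F1 : forall v, h v = 1 -> v = z0.
Hypothesis F2a : forall v, E v z0 -> h v = 0 -> v = zl.
Hypothesis F2b : forall v, E z0 v -> h v = 2 -> v = z1.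
Hypothesis F3 : forall v, E z1 v -> h v = 3 -> v = z2.
Hypothesis F5 : ~~ E zl z2.

Lemma eq_or_e u v : connect (e E h) u v -> h v <= h u + 1 -> u = v \/ e E h u v.
Proof.
move=> c hv; have hv2 : h v <= h u + 2 by lia.
case: (conn_small c hv2) => [->|[H|[m]]]; [by left | by right | ].
rewrite /e => /andP [_ h1] /andP [_ h2]; lia.
Qed.

Lemma STproof : forall a b p q, E a b -> h a < h b -> connect (e E h) a p ->
  connect (e E h) p q -> connect (e E h) q b -> h p < h q -> E p q.
Proof.
move=> a b p q Eab hab cap cpq cqb hpq.
have hap := conn_mono cap; have hqb := conn_mono cqb.
have ha := h4 a; have hb := h4 b; have hp := h4 p; have hq := h4 q.
case: (leqP (h q) (h p + 1)) => gap.
  case: (eq_or_e cpq gap) => [pq|]; first by move: hpq; rewrite pq ltnn.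
  by case/andP.
have qb3 : h q = 3 -> q = b.
  move=> hq3; case: (eq_or_e cqb) => //; first lia.
  rewrite /e => /andP [_]; lia.
case hp0 : (h p) => [|hp1].
- have ap : a = p.
    case: (eq_or_e cap) => //; first lia.
    rewrite /e => /andP [_]; lia.
  subst a.
  case: (ltnP (h q) 3) => hq3; last first.
    have qb : q = b by apply: qb3; lia.
    by subst q.
  case: (conn_small cpq) => [|pq|[|[m]]]; try lia.
  + by move: hpq; rewrite pq ltnn.
  + by case/andP.
  rewrite /e => /andP [Epm hpm] /andP [Emq hmq].
  case: (eq_or_e cqb) => [|qb|]; first lia.
    by subst b.
  rewrite /e => /andP [Eqb hqb'].
  have hb3 : h b = 3 by lia.
  have hm1 : h m = 1 by lia.
  have mz := F1 hm1; subst m.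
  have pl := F2a Epm hp0; subst p.
  have hq2 : h q = 2 by lia.
  have qz := F2b Emq hq2; subst q.
  have bz := F3 Eqb hb3; subst b.
  by move: F5; rewrite Eab.
- have hp1' : h p = 1 by lia.
  have pz := F1 hp1'; subst p.
  have hq3 : h q = 3 by lia.
  have qb := qb3 hq3; subst b.
  case: (conn_small cpq) => [|pq|[|[m]]]; try lia.
  + by move: hpq; rewrite pq ltnn.
  + by case/andP.
  rewrite /e => /andP [Epm hpm] /andP [Emq hmq].
  have hm2 : h m = 2 by lia.
  have mz := F2b Epm hm2; subst m.
  have qz := F3 Emq hq3; subst q.
  case: (eq_or_e cap) => [|ap|]; first lia.
    by subst a.
  rewrite /e => /andP [Eaz haz].
  have ha0 : h a = 0 by lia.
  have al := F2a Eaz ha0; subst a.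
  by move: F5; rewrite Eab.
Qed.
End ST.

Section Spec.
Variables n x : nat.
Hypotheses (x1 : 1 < x) (xn : x < n) (n3 : n %% 3 = 2) (x3 : x %% 3 = 2).

Definition hc (i : 'I_(2 * n)) : nat :=
  if nat_of_ord i == 0 then 1 else if nat_of_ord i %% 3 == 0 then 0
  else if nat_of_ord i %% 3 == 1 then 2 else 3.

Lemma hspec (i : 'I_(2 * n)) :
  (nat_of_ord i = 0 /\ hc i = 1) \/ (nat_of_ord i <> 0 /\ nat_of_ord i %% 3 = 0 /\ hc i = 0) \/
  (nat_of_ord i %% 3 = 1 /\ hc i = 2) \/ (nat_of_ord i %% 3 = 2 /\ hc i = 3).
Proof.
rewrite /hc; case: eqP => [->|i0]; first by left.
case: eqP => [m0|m0]; first by right; left.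
case: eqP => [m1|m1]; first by right; right; left.
by right; right; right; split => //; lia.
Qed.

Lemma Earith (i j : 'I_(2 * n)) : C2n_x1n n x i j ->
  exists d, ((i <= j /\ d = j - i) \/ (j < i /\ d = i - j)) /\
    (d = 1 \/ d = x \/ d = n \/ 2 * n - d = 1 \/ 2 * n - d = x \/ 2 * n - d = n).
Proof.
rewrite /C2n_x1n /circulant inE /= => H.
exists (absdiff i j); split.
  by rewrite /absdiff; case: leqP => hh; [left | right].
move: H; move: (absdiff i j) => d.
move=> /orP [/orP [/eqP H|/eqP H]|/eqP H]; move: H; rewrite /minn;
  case: (ltnP d (2 * n - d)) => _ H; lia.
Qed.


Lemma Csym (i j : 'I_(2 * n)) : C2n_x1n n x i j = C2n_x1n n x j i.
Proof.
rewrite /C2n_x1n /circulant.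
have -> : absdiff i j = absdiff j i.
  by rewrite /absdiff; case: (leqP i j); case: (leqP j i) => *; lia.
by [].
Qed.

Lemma Ch (i j : 'I_(2 * n)) : C2n_x1n n x i j -> hc i != hc j.
Proof.
move=> /Earith [d [Hd He]]; have := hspec i; have := hspec j.
have := ltn_ord i; have := ltn_ord j; move=> *; apply/eqP.
case: Hd => [[Hd1 Hd2]|[Hd1 Hd2]]; subst d.
all: (case: He => [He|[He|[He|[He|[He|He]]]]]; lia).
Qed.

Lemma hc4 (i : 'I_(2 * n)) : hc i < 4.
Proof. by rewrite /hc; repeat case: ifP. Qed.

End Spec.

Theorem theorem21 (n x : nat) :
  1 < x -> x < n -> n %% 3 = 2 -> x %% 3 = 2 ->
  word_representable (C2n_x1n n x).
Proof.
move=> x1 xn n3 x3.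
have l0 : 0 < 2 * n by lia.
have l1 : 1 < 2 * n by lia.
have l2 : 2 < 2 * n by lia.
have ll : (2 * n).-1 < 2 * n by lia.
pose z0 := Ordinal l0; pose z1 := Ordinal l1; pose z2 := Ordinal l2;
pose zl := Ordinal ll.
have HS := hspec x1 xn n3 x3; have EA := Earith x1 xn n3 x3.
apply: (@gen_wr _ _ (@hc n)).
- exact: hc4.
- exact: Csym x1 xn n3 x3.
- exact: Ch x1 xn n3 x3.
- apply: (@STproof _ _ _ (@hc4 n) z0 zl z1 z2).
  + move=> v hv; apply: val_inj => /=; have := HS v; lia.
  + move=> v /EA [d [Hd He]] hv; apply: val_inj => /=.
    have := HS v; have := ltn_ord v; move: Hd He => /=; lia.
  + move=> v /EA [d [Hd He]] hv; apply: val_inj => /=.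
    have := HS v; have := ltn_ord v; move: Hd He => /=; lia.
  + move=> v /EA [d [Hd He]] hv; apply: val_inj => /=.
    have := HS v; have := ltn_ord v; move: Hd He => /=; lia.
  + apply/negP => /EA [d [Hd He]]; move: Hd He => /=; lia.
Qed.
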